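(* Let $d\ge1$ be a feasible integer. Let $V$ be a standard $U_q(\widehat{\mathfrak{sl}}_2)$-module of diameter $1$ and $W$ a standard $U_q(\widehat{\mathfrak{sl}}_2)$-module of diameter $d-1$, so that $V\otimes W$ is standard of diameter $d$. Writing $\sigma_n(X)$ for the $n$-th term of the normalized split sequence of a module $X$, we have $\sigma_0(V\otimes W)=1$, $$\sigma_n(V\otimes W)=(q^{d-n}-q^{n-d})(bb^*q^{n-d}-cc^*q^{d-n})\,\sigma_{n-1}(W)+\sigma_n(W)+\sigma_1(V)\,\sigma_{n-1}(W)\qquad(1\le n\le d-1),$$ and $\sigma_d(V\otimes W)=\sigma_1(V)\,\sigma_{d-1}(W)$.
   Context: Let $\mathbb F$ be an algebraically closed field and fix nonzero $q\in\mathbb F$ with $q^2\ne1$; write $[n]_q=(q^n-q^{-n})/(q-q^{-1})$. $U_q(\widehat{\mathfrak{sl}}_2)$ is the associative unital $\mathbb F$-algebra with generators $e_i^{\pm},K_i^{\pm1}$ ($i\in\{0,1\}$) and relations $K_iK_i^{-1}=K_i^{-1}K_i=1$, $K_0K_1=K_1K_0$, $K_ie_i^{\pm}K_i^{-1}=q^{\pm2}e_i^{\pm}$, $K_ie_j^{\pm}K_i^{-1}=q^{\mp2}e_j^{\pm}$ ($i\ne j$), $e_i^+e_i^--e_i^-e_i^+=(K_i-K_i^{-1})/(q-q^{-1})$, $e_0^{\pm}e_1^{\mp}=e_1^{\mp}e_0^{\pm}$, and $(e_i^\pm)^3e_j^\pm-[3]_q(e_i^\pm)^2e_j^\pm e_i^\pm+[3]_qe_i^\pm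 e_j^\pm(e_i^\pm)^2-e_j^\pm(e_i^\pm)^3=0$ ($i\ne j$). Tensor products of modules are formed via $e_i^+(v\otimes w)=e_i^+v\otimes K_iw+v\otimes e_i^+w$, $e_i^-(v\otimes w)=e_i^-v\otimes w+K_i^{-1}v\otimes e_i^-w$, $K_i(v\otimes w)=K_iv\otimes K_iw$. For nonzero $\alpha\in\mathbb F$, $V(\alpha)$ is the module with basis $x,y$ and $K_1x=qx$, $K_1y=q^{-1}y$, $e_1^-x=y$, $e_1^-y=0$, $e_1^+x=0$, $e_1^+y=x$, $K_0x=q^{-1}x$, $K_0y=qy$, $e_0^-x=0$, $e_0^-y=q\alpha^{-1}x$, $e_0^+x=q^{-1}\alpha y$, $e_0^+y=0$. A standard module of diameter $d$ is $V(\alpha_1)\otimes\cdots\otimes V(\alpha_d)$ with all $\alpha_i\in\mathbb F$ nonzero (for $d=0$: the trivial module, on which each $e_i^\pm$ acts as $0$ and each $K_i^{\pm1}$ as $1$). An integer $d$ is feasible if $d\ge0$ and $q^{2i}\ne1$ for $1\le i\le d$. For a standard $V$ of diameter $d$, $U_0$ is the $1$-dimensional span of $x\otimes\cdots\otimes x$. Fix nonzero $b,c,b^*,c^*\in\mathbb F$ and $u,v,u^*,v^*\in\mathbb F$ with $uv^*=-bb^*q^{-1}(q-q^{-1})^2$ and $vu^*=-cc^*q^{-1}(q-q^{-1})^2$; set $R=ue_0^++ve_1^-K_1$ and $L=u^*e_1^++v^*e_0^-K_0$. For a standard module $V$ of feasible diameter $d$ and $0\le i\le d$, $\zeta_i$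 is the scalar by which $L^iR^i$ acts on $U_0$ (the split sequence), and the normalized split sequence is $\sigma_i=\zeta_i/\prod_{k=1}^i(q^k-q^{-k})^2$ (so $\sigma_0=1$). *)

(* Defs.v *)
From HB Require Import structures.
From mathcomp Require Import all_boot all_order all_algebra.
Set Implicit Arguments. Unset Strict Implicit. Unset Printing Implicit Defensive.
Import Order.TTheory GRing.Theory Num.Theory.
Local Open Scope ring_scope.

Inductive gen := E0p | E0m | E1p | E1m | K0 | K1 | K0i | K1i.

Section Std.
Variable F : fieldType.
Variable q : F.

(* Vectors of a standard module of diameter d: coordinates w.r.t. the basis
   of pure tensors v_1 (x) ... (x) v_d, indexed by words of length d over
   bool (true = x, false = y).  Coordinates at words of other lengths are
   irrelevant (they stay 0). *)
Definition vec := seq bool -> F.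
Definition op := vec -> vec.

Definition addop (A B : op) : op := fun f w => A f w + B f w.
Definition idop : op := fun f => f.

(* Matrix of a generator on V(a): mV a g b b' = coefficient of basis
   vector b in g . (basis vector b'). *)
Definition mV (a : F) (g : gen) (b b' : bool) : F :=
  match g, b, b' with
  | K1, true, true => q | K1, false, false => q^-1
  | K1i, true, true => q^-1 | K1i, false, false => q
  | K0, true, true => q^-1 | K0, false, false => q
  | K0i, true, true => q | K0i, false, false => q^-1
  | E1m, false, true => 1
  | E1p, true, false => 1
  | E0m, true, false => q / a
  | E0p, false, true => a / q
  | _, _, _ => 0
  end.

Definition id2 (b b' : bool) : F := if b == b' then 1 else 0.

(* A (x) B, for A acting on the first tensor factor V(a) and B on the rest *)
Definition tens (A : bool -> bool -> F) (B : op) : op := fun f w =>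
  match w with
  | [::] => 0
  | b :: w' => A b true * B (fun u => f (true :: u)) w'
             + A b false * B (fun u => f (false :: u)) w'
  end.

(* Action of the generators on V(a_1) (x) (V(a_2) (x) ( ... (x) (V(a_d) (x) triv))),
   using the coproduct given in the paper. *)
Fixpoint act (s : seq F) : gen -> op :=
  match s with
  | [::] => fun g f w =>
      match g with
      | K0 | K1 | K0i | K1i => if w is [::] then f [::] else 0
      | _ => 0
      end
  | a :: s' => fun g =>
      match g with
      | E0p => addop (tens (mV a E0p) (act s' K0)) (tens id2 (act s' E0p))
      | E1p => addop (tens (mV a E1p) (act s' K1)) (tens id2 (act s' E1p))
      | E0m => addop (tens (mV a E0m) idop) (tens (mV a K0i) (act s' E0m))
      | E1m => addop (tens (mV a E1m) idop) (tens (mV a K1i) (act s' E1m))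
      | K0 => tens (mV a K0) (act s' K0)
      | K1 => tens (mV a K1) (act s' K1)
      | K0i => tens (mV a K0i) (act s' K0i)
      | K1i => tens (mV a K1i) (act s' K1i)
      end
  end.

Variables u v us vs : F.

Definition Rop (s : seq F) : op := fun f w =>
  u * act s E0p f w + v * act s E1m (act s K1 f) w.
Definition Lop (s : seq F) : op := fun f w =>
  us * act s E1p f w + vs * act s E0m (act s K0 f) w.

(* the vector x (x) ... (x) x spanning U_0 *)
Definition u0 (d : nat) : vec := fun w => if w == nseq d true then 1 else 0.

(* split sequence: zeta_i is the scalar by which L^i R^i acts on U_0,
   read off as the coefficient of x (x) ... (x) x in L^i R^i (x (x) ... (x) x). *)
Definition zeta (s : seq F) (i : nat) : F :=
  iter i (Lop s) (iter i (Rop s) (u0 (size s))) (nseq (size s) true).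

Definition sigma (s : seq F) (i : nat) : F :=
  zeta s i / \prod_(1 <= k < i.+1) (q ^+ k - q ^- k) ^+ 2.

End Std.

Definition feasible (F : fieldType) (q : F) (d : nat) : Prop :=
  forall i : nat, (1 <= i <= d)%N -> q ^+ (2 * i) != 1.

(* Main.v *)
Require Import Defs.
From HB Require Import structures.
From mathcomp Require Import all_boot all_order all_algebra.
From Stdlib Require Import Ring Field FunctionalExtensionality.
Import Order.TTheory GRing.Theory Num.Theory.
Local Open Scope ring_scope.
Set Implicit Arguments. Unset Strict Implicit.

Section FieldTac.
Variable F : fieldType.
Definition fadd (x y : F) : F := x + y.
Definition fmul (x y : F) : F := x * y.
Definition fopp (x : F) : F := - x.
Definition finv (x : F) : F := x^-1.
Definition fzero : F := 0.
Definition fone : F := 1.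
Definition fsub (x y : F) : F := fadd x (fopp y).
Definition fdiv (x y : F) : F := fmul x (finv y).
Lemma addE (x y : F) : x + y = fadd x y. Proof. by []. Qed.
Lemma mulE (x y : F) : x * y = fmul x y. Proof. by []. Qed.
Lemma oppE (x : F) : - x = fopp x. Proof. by []. Qed.
Lemma invE (x : F) : x^-1 = finv x. Proof. by []. Qed.
Lemma zeroE : 0 = fzero :> F. Proof. by []. Qed.
Lemma oneE : 1 = fone :> F. Proof. by []. Qed.
Definition fexp (x : F) (n : nat) : F := x ^+ n.
Lemma expE (x : F) n : x ^+ n = fexp x n. Proof. by []. Qed.
Lemma fsubE (x y : F) : fsub x y = x - y. Proof. by []. Qed.
Lemma fdivE (x y : F) : fdiv x y = x / y. Proof. by []. Qed.
Lemma Fring : @ring_theory F fzero fone fadd fmul fsub fopp eq.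
Proof. rewrite /fzero /fone /fsub /fadd /fmul /fopp. split; intros; rewrite ?add0r ?mul1r ?mulrA ?addrA ?subrr //; (try by rewrite addrC); (try by rewrite mulrC); by rewrite mulrDl. Qed.
Lemma Ffield : @field_theory F fzero fone fadd fmul fsub fopp fdiv finv eq.
Proof. split. exact Fring. rewrite /fzero /fone; by apply/eqP; rewrite oner_eq0. by []. rewrite /fzero /fone /fmul /finv => p Hp; rewrite mulVf //; exact/eqP. Qed.
End FieldTac.
Global Opaque fexp fone fzero fadd fmul fopp finv fsub fdiv.


Lemma neq0P (F : fieldType) (x : F) : x != 0 -> x <> fzero F.
Proof. by move/eqP. Qed.

Section Main.
Variable F : fieldType.
Add Field Ffield_main : (Ffield F).
Variable q : F.
Hypothesis hq : q != 0.
Ltac fld := rewrite ?expE ?addE ?mulE ?oppE ?invE ?zeroE ?oneE;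
  match goal with |- @eq _ ?x ?y => change (@eq (GRing.Field.sort F) x y) end;
  first [ring | field; repeat split; try (match goal with h : is_true (?x != 0) |- _ => exact (neq0P h) end)].


Definition vadd (f g : vec F) : vec F := fun w => f w + g w.
Definition vsc (c : F) (f : vec F) : vec F := fun w => c * f w.
Definition join (X Y : vec F) : vec F := fun w =>
  match w with [::] => 0 | true :: w' => X w' | false :: w' => Y w' end.
Definition fx (f : vec F) : vec F := fun w => f (true :: w).
Definition fy (f : vec F) : vec F := fun w => f (false :: w).

Lemma fx_join X Y : fx (join X Y) = X. Proof. by []. Qed.
Lemma fy_join X Y : fy (join X Y) = Y. Proof. by []. Qed.
Lemma fx_add f g : fx (vadd f g) = vadd (fx f) (fx g). Proof. by []. Qed.
Lemma fy_add f g : fy (vadd f g) = vadd (fy f) (fy g). Proof. by []. Qed.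
Lemma fx_sc c f : fx (vsc c f) = vsc c (fx f). Proof. by []. Qed.
Lemma fy_sc c f : fy (vsc c f) = vsc c (fy f). Proof. by []. Qed.

Ltac pw := let w := fresh "w" in apply: functional_extensionality => w; case: w => [|[] w];
  rewrite /vadd /vsc /join /fx /fy /= ?/addop /= ?/tens /= ?/id2 ?/idop /=; fld.

Notation act := (act q).

Lemma aE0p a s f : act (a :: s) E0p f =
  join (act s E0p (fx f)) (vadd (vsc (a/q) (act s K0 (fx f))) (act s E0p (fy f))).
Proof. pw. Qed.
Lemma aE1p a s f : act (a :: s) E1p f =
  join (vadd (act s K1 (fy f)) (act s E1p (fx f))) (act s E1p (fy f)).
Proof. pw. Qed.
Definition ainv (x : F) := x^-1.
Lemma aE0m a s f : act (a :: s) E0m f =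
  join (vadd (vsc (q * ainv a) (fy f)) (vsc q (act s E0m (fx f)))) (vsc q^-1 (act s E0m (fy f))).
Proof. rewrite /ainv; pw. Qed.
Lemma aE1m a s f : act (a :: s) E1m f =
  join (vsc q^-1 (act s E1m (fx f))) (vadd (fx f) (vsc q (act s E1m (fy f)))).
Proof. pw. Qed.
Lemma aK0 a s f : act (a :: s) K0 f = join (vsc q^-1 (act s K0 (fx f))) (vsc q (act s K0 (fy f))).
Proof. pw. Qed.
Lemma aK1 a s f : act (a :: s) K1 f = join (vsc q (act s K1 (fx f))) (vsc q^-1 (act s K1 (fy f))).
Proof. pw. Qed.
Lemma aK0i a s f : act (a :: s) K0i f = join (vsc q (act s K0i (fx f))) (vsc q^-1 (act s K0i (fy f))).
Proof. pw. Qed.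
Lemma aK1i a s f : act (a :: s) K1i f = join (vsc q^-1 (act s K1i (fx f))) (vsc q (act s K1i (fy f))).
Proof. pw. Qed.

Ltac acons := rewrite ?aE0p ?aE1p ?aE0m ?aE1m ?aK0 ?aK1 ?aK0i ?aK1i
  ?fx_join ?fy_join ?fx_add ?fy_add ?fx_sc ?fy_sc.

Lemma act_lin s g f1 f2 c1 c2 :
  act s g (vadd (vsc c1 f1) (vsc c2 f2)) = vadd (vsc c1 (act s g f1)) (vsc c2 (act s g f2)).
Proof.
elim: s g f1 f2 c1 c2 => [|a s IH] g f1 f2 c1 c2.
  case: g; pw.
case: g; acons; rewrite ?IH; pw.
Qed.

Lemma act_add s g f1 f2 : act s g (vadd f1 f2) = vadd (act s g f1) (act s g f2).
Proof.
have -> : vadd f1 f2 = vadd (vsc 1 f1) (vsc 1 f2) by pw.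
rewrite act_lin; pw.
Qed.
Lemma act_sc s g c f : act s g (vsc c f) = vsc c (act s g f).
Proof.
have -> : vsc c f = vadd (vsc c f) (vsc 0 f) by pw.
rewrite act_lin; pw.
Qed.
Definition vz : vec F := fun _ => 0.
Lemma act_zero s g : act s g vz = vz.
Proof.
have -> : vz = vsc 0 vz by rewrite /vz; pw.
rewrite act_sc; rewrite /vz; pw.
Qed.

Ltac lin := rewrite ?act_add ?act_sc.

Lemma comm01 s f : act s K1 (act s K0 f) = act s K0 (act s K1 f).
Proof.
elim: s f => [|a s IH] f; first by pw.
acons; lin; rewrite !IH; pw.
Qed.

Definition c0 (g : gen) : F := match g with
  | E0p | E1m => q * q | E1p | E0m => q^-1 * q^-1 | _ => 1 end.
Definition c1 (g : gen) : F := match g with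
  | E0p | E1m => q^-1 * q^-1 | E1p | E0m => q * q | _ => 1 end.
Definition isE (g : gen) : bool := match g with E0p | E1m | E1p | E0m => true | _ => false end.

Lemma commE s g : isE g -> forall f,
  act s K0 (act s g f) = vsc (c0 g) (act s g (act s K0 f)) /\
  act s K1 (act s g f) = vsc (c1 g) (act s g (act s K1 f)).
Proof.
elim: s g => [|a s IH] g hg f.
  by case: g hg => // _; split; pw.
case: g hg => // _; [set g0 := E0p | set g0 := E0m | set g0 := E1p | set g0 := E1m];
  have I0 := fun f => proj1 (IH g0 isT f); have I1 := fun f => proj2 (IH g0 isT f);
  rewrite /g0 /= in I0 I1; split; acons; lin;
  rewrite ?I0 ?I1 ?comm01; lin; pw.
Qed.

Lemma comm0 s g (hg : isE g) f : act s K0 (act s g f) = vsc (c0 g) (act s g (act s K0 f)).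
Proof. exact: (proj1 (commE s hg f)). Qed.
Lemma comm1 s g (hg : isE g) f : act s K1 (act s g f) = vsc (c1 g) (act s g (act s K1 f)).
Proof. exact: (proj2 (commE s hg f)). Qed.

Variables u v us vs : F.
Notation R s := (Rop q u v s).
Notation L s := (Lop q us vs s).

Lemma Rop_eq s f : R s f = vadd (vsc u (act s E0p f)) (vsc v (act s E1m (act s K1 f))).
Proof. by []. Qed.
Lemma Lop_eq s f : L s f = vadd (vsc us (act s E1p f)) (vsc vs (act s E0m (act s K0 f))).
Proof. by []. Qed.
Lemma R_sc s c f : R s (vsc c f) = vsc c (R s f).
Proof. rewrite !Rop_eq; lin; pw. Qed.
Lemma L_sc s c f : L s (vsc c f) = vsc c (L s f).
Proof. rewrite !Lop_eq; lin; pw. Qed.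
Lemma R_add s f g : R s (vadd f g) = vadd (R s f) (R s g).
Proof. rewrite !Rop_eq; lin; pw. Qed.
Lemma L_add s f g : L s (vadd f g) = vadd (L s f) (L s g).
Proof. rewrite !Lop_eq; lin; pw. Qed.

Lemma R_cons a s X Y : R (a :: s) (join X Y) =
  join (R s X) (vadd (R s Y) (vadd (vsc (u * (a / q)) (act s K0 X)) (vsc (v * q) (act s K1 X)))).
Proof. rewrite !Rop_eq; acons; lin; pw. Qed.
Lemma L_cons a s X Y : L (a :: s) (join X Y) =
  join (vadd (L s X) (vadd (vsc us (act s K1 Y)) (vsc (vs * (q * ainv a) * q) (act s K0 Y)))) (L s Y).
Proof. rewrite !Lop_eq; acons; lin; pw. Qed.

Lemma R_K0 s l f : act s K0 f = vsc l f -> act s K0 (R s f) = vsc (l * (q * q)) (R s f).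
Proof.
move=> H; rewrite !Rop_eq; lin.
have A0 := comm0 s (g:=E0p) isT; have B0 := comm0 s (g:=E1m) isT.
rewrite A0 B0 -comm01 !H; lin; pw.
Qed.
Lemma R_K1 s l f : act s K1 f = vsc l f -> act s K1 (R s f) = vsc (l * (q^-1 * q^-1)) (R s f).
Proof.
move=> H; rewrite !Rop_eq; lin.
have A1 := comm1 s (g:=E0p) isT; have B1 := comm1 s (g:=E1m) isT.
rewrite A1 B1 !H; lin; rewrite ?H; lin; pw.
Qed.
Lemma L_K0 s l f : act s K0 f = vsc l f -> act s K0 (L s f) = vsc (l * (q^-1 * q^-1)) (L s f).
Proof.
move=> H; rewrite !Lop_eq; lin.
have A0 := comm0 s (g:=E1p) isT; have B0 := comm0 s (g:=E0m) isT.
rewrite A0 B0 !H; lin; rewrite ?H; lin; pw.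
Qed.
Lemma L_K1 s l f : act s K1 f = vsc l f -> act s K1 (L s f) = vsc (l * (q * q)) (L s f).
Proof.
move=> H; rewrite !Lop_eq; lin.
have A1 := comm1 s (g:=E1p) isT; have B1 := comm1 s (g:=E0m) isT.
rewrite A1 B1 comm01 !H; lin; pw.
Qed.

Lemma u0_cons n : u0 F n.+1 = join (u0 F n) vz.
Proof.
apply: functional_extensionality => w; case: w => [|[] w] //=.
Qed.

Lemma u0_K0 s : act s K0 (u0 F (size s)) = vsc ((q^-1) ^+ size s) (u0 F (size s)).
Proof.
elim: s => [|a s IH]; first by rewrite /u0 expr0; pw.
rewrite [size _]/= u0_cons aK0 fx_join fy_join act_zero IH exprS /vz; pw.
Qed.
Lemma u0_K1 s : act s K1 (u0 F (size s)) = vsc (q ^+ size s) (u0 F (size s)).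
Proof.
elim: s => [|a s IH]; first by rewrite /u0 expr0; pw.
rewrite [size _]/= u0_cons aK1 fx_join fy_join act_zero IH exprS /vz; pw.
Qed.

Definition lam0 n k : F := (q^-1) ^+ n * (q * q) ^+ k.
Definition lam1 n k : F := q ^+ n * (q^-1 * q^-1) ^+ k.
Definition rr s k := iter k (R s) (u0 F (size s)).

Lemma rr_K0 s k : act s K0 (rr s k) = vsc (lam0 (size s) k) (rr s k).
Proof.
elim: k => [|k IH]; first by rewrite /rr /lam0 /= u0_K0 expr0 mulr1.
by rewrite /rr /= (R_K0 IH) /lam0 exprSr !mulrA.
Qed.
Lemma rr_K1 s k : act s K1 (rr s k) = vsc (lam1 (size s) k) (rr s k).
Proof.
elim: k => [|k IH]; first by rewrite /rr /lam1 /= u0_K1 expr0 mulr1.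
by rewrite /rr /= (R_K1 IH) /lam1 exprSr !mulrA.
Qed.

Fixpoint gsumF (f : nat -> F) k := if k is k'.+1 then gsumF f k' + f k' else 0.
Definition alpha a n i := u * (a / q) * lam0 n i + v * q * lam1 n i.

Lemma Riter a s k : iter k (R (a :: s)) (u0 F (size s).+1) =
  join (rr s k) (vsc (gsumF (alpha a (size s)) k) (rr s k.-1)).
Proof.
elim: k => [|k IH]; first by rewrite /= u0_cons /rr /vz; pw.
rewrite iterS IH R_cons R_sc rr_K0 rr_K1.
case: k IH => [|k] IH; rewrite /rr /alpha /=; pw.
Qed.

Lemma Lit_K0 s Y m0 m : act s K0 Y = vsc m0 Y ->
  act s K0 (iter m (L s) Y) = vsc (m0 * (q^-1 * q^-1) ^+ m) (iter m (L s) Y).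
Proof.
move=> H; elim: m => [|m IH]; first by rewrite /= expr0 mulr1.
by rewrite iterS (L_K0 IH) exprSr !mulrA.
Qed.
Lemma Lit_K1 s Y m1 m : act s K1 Y = vsc m1 Y ->
  act s K1 (iter m (L s) Y) = vsc (m1 * (q * q) ^+ m) (iter m (L s) Y).
Proof.
move=> H; elim: m => [|m IH]; first by rewrite /= expr0 mulr1.
by rewrite iterS (L_K1 IH) exprSr !mulrA.
Qed.

Definition beta a m1 m0 l := us * (m1 * (q * q) ^+ l) + vs * (q * ainv a) * q * (m0 * (q^-1 * q^-1) ^+ l).

Lemma Liter a s X Y m1 m0 m : act s K1 Y = vsc m1 Y -> act s K0 Y = vsc m0 Y ->
  iter m (L (a :: s)) (join X Y) =
  join (vadd (iter m (L s) X) (vsc (gsumF (beta a m1 m0) m) (iter m.-1 (L s) Y))) (iter m (L s) Y).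
Proof.
move=> H1 H0; elim: m => [|m IH]; first by rewrite /=; pw.
rewrite iterS IH L_cons L_add L_sc (Lit_K1 _ H1) (Lit_K0 _ H0).
case: m IH => [|m] IH; rewrite /beta /=; pw.
Qed.

Lemma Lit_sc s c Y m : iter m (L s) (vsc c Y) = vsc c (iter m (L s) Y).
Proof. elim: m => [|m IH] //=; by rewrite IH L_sc. Qed.

Lemma zeta_cons a s k : (0 < k)%N ->
  zeta q u v us vs (a :: s) k = zeta q u v us vs s k +
    gsumF (beta a (lam1 (size s) k.-1) (lam0 (size s) k.-1)) k
    * gsumF (alpha a (size s)) k * zeta q u v us vs s k.-1.
Proof.
move=> hk.
rewrite /zeta [size (a :: s)]/= Riter.
have E1 : act s K1 (vsc (gsumF (alpha a (size s)) k) (rr s k.-1)) =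
  vsc (lam1 (size s) k.-1) (vsc (gsumF (alpha a (size s)) k) (rr s k.-1)).
  by rewrite act_sc rr_K1; pw.
have E0 : act s K0 (vsc (gsumF (alpha a (size s)) k) (rr s k.-1)) =
  vsc (lam0 (size s) k.-1) (vsc (gsumF (alpha a (size s)) k) (rr s k.-1)).
  by rewrite act_sc rr_K0; pw.
rewrite (Liter a _ k E1 E0) Lit_sc /= /vadd /vsc /rr.
fld.
Qed.

Lemma K1pt s f w : act s K1 f w =
  if size w == size s then q ^+ (count id w) * (q^-1) ^+ (count negb w) * f w else 0.
Proof.
elim: s f w => [|a s IH] f w.
  by case: w => [|b w] //=; rewrite !expr0 !mul1r.
rewrite aK1; case: w => [|[] w] //=; rewrite /vsc IH /fx /fy eqSS;
  case: (size w == size s); rewrite ?mulr0 // !exprS ?add0n; fld.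
Qed.

Lemma vz_L s : L s vz = vz.
Proof.
have -> : vz = vsc 0 vz by rewrite /vz; pw.
rewrite L_sc /vz; pw.
Qed.

Lemma rr_top s : (forall i, (1 <= i <= (size s).+1)%N -> q ^+ (2 * i) != 1) ->
  rr s (size s).+1 = vz.
Proof.
move=> hf; set n := size s.
have E := rr_K1 s n.+1.
apply: functional_extensionality => w.
have Ew := congr1 (fun f => f w) E; rewrite /= K1pt /vsc /vz in Ew *.
have hqn : forall m, q ^+ m != 0 by move=> m; rewrite expf_neq0.
have hqi : q^-1 != 0 by rewrite invr_eq0.
have hl : lam1 n n.+1 != 0 by rewrite /lam1 mulf_neq0 // expf_neq0 // mulf_neq0.
have [hw|hw] := eqVneq (size w) n; last first.
  rewrite (negbTE hw) in Ew.
  by move/eqP: Ew; rewrite eq_sym mulf_eq0 (negbTE hl) /= => /eqP.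
rewrite hw eqxx in Ew.
set t := count id w in Ew; set f := count negb w in Ew.
have htf : (t + f)%N = n.
  by rewrite -hw /t /f -(count_predC id w).
have hfn : (f <= n)%N by rewrite -htf leq_addl.
set r := rr s n.+1 w in Ew *.
have hne : q ^+ t * q^-1 ^+ f != lam1 n n.+1.
  apply/negP => /eqP he.
  pose X := q ^+ t; pose Y := q ^+ f; pose Z := q ^+ (n.+1 - f).
  have hX : X != 0 by apply: hqn.
  have hY : Y != 0 by apply: hqn.
  have hZ : Z != 0 by apply: hqn.
  have hn1 : q ^+ n.+1 = Y * Z by rewrite /Y /Z -exprD subnKC // ltnW.
  have hl' : lam1 n n.+1 = X * Y / ((Y * Z) * (Y * Z)).
    by rewrite /lam1 -invfM exprVn exprMn hn1 -{1}htf exprD.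
  have he' : X / Y = X * Y / ((Y * Z) * (Y * Z)) by rewrite -hl' -he /X /Y exprVn.
  have hZZ : Z * Z = 1.
    have -> : Z * Z = (X / Y) * (Y * Z * (Y * Z)) / (X * Y) by fld.
    rewrite he'; fld.
  have : q ^+ (2 * (n.+1 - f)) != 1 by apply: hf; rewrite subn_gt0 ltnS hfn leq_subr.
  by rewrite mulnC exprM -/Z expr2 hZZ eqxx.
have : (q ^+ t * q^-1 ^+ f - lam1 n n.+1) * r == 0 by rewrite mulrBl Ew subrr.
by rewrite mulf_eq0 subr_eq0 (negbTE hne) /= => /eqP.
Qed.

Lemma key (a M Y bbs ccs : F) : a != 0 -> M != 0 -> Y != 0 -> q * q - 1 != 0 -> q - q^-1 != 0 ->
 u * vs = - bbs * q^-1 * (q - q^-1) ^+ 2 -> v * us = - ccs * q^-1 * (q - q^-1) ^+ 2 ->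
 (us * (M * Y * (Y^-1 * Y^-1)) * ((q * q * (Y * Y) - 1) / (q * q - 1))
   + vs * (q * a^-1) * q * ((M * Y)^-1 * (Y * Y)) * ((q^-1 * q^-1 * (Y^-1 * Y^-1) - 1) / (q^-1 * q^-1 - 1))) *
 (u * (a / q) * (M * Y)^-1 * ((q * q * (Y * Y) - 1) / (q * q - 1))
   + v * q * (M * Y) * ((q^-1 * q^-1 * (Y^-1 * Y^-1) - 1) / (q^-1 * q^-1 - 1)))
 = (q * Y - (q * Y)^-1) ^+ 2 * ((M - M^-1) * (bbs * M^-1 - ccs * M)
   + (u * (a / q) + v * q) * (us + vs * (q * a^-1) * q) / (q - q^-1) ^+ 2).
Proof.
move=> ha hM hY hq2 hqq huv hvu.
have hbb : bbs = - (u * vs) * q / (q - q^-1) ^+ 2.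
  rewrite huv expr2; fld.
have hcc : ccs = - (v * us) * q / (q - q^-1) ^+ 2.
  rewrite hvu expr2; fld.
have hq2' : q^-1 * q^-1 - 1 != 0.
  rewrite -invfM subr_eq0 eq_sym -[1](@invr1 F) (inj_eq (@invr_inj F)) -subr_eq0 //.
  by rewrite -opprB oppr_eq0.
have h1 : 1 + (- 1) * (q * q) != 0 by rewrite mulN1r -opprB oppr_eq0.
rewrite hbb hcc !expr2; fld.
Qed.

Definition gs (x : F) k := gsumF (fun i => x ^+ i) k.
Lemma gsS x k : gs x k.+1 = gs x k + x ^+ k. Proof. by []. Qed.
Lemma geom x k : (x - 1) * gs x k = x ^+ k - 1.
Proof.
elim: k => [|k IH]; first by rewrite /gs /= expr0 mulr0 subrr.
rewrite /gs /= mulrDr -/(gs x k) IH exprS; set X := x ^+ k; fld.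
Qed.
Lemma alpha_sum a n k : gsumF (alpha a n) k =
  u * (a / q) * (q^-1) ^+ n * gs (q * q) k + v * q * q ^+ n * gs (q^-1 * q^-1) k.
Proof.
elim: k => [|k IH]; first by rewrite /gs /= !mulr0 addr0.
rewrite !gsS /= IH /alpha /lam0 /lam1; fld.
Qed.
Lemma beta_sum a m1 m0 k : gsumF (beta a m1 m0) k =
  us * m1 * gs (q * q) k + vs * (q * ainv a) * q * m0 * gs (q^-1 * q^-1) k.
Proof.
elim: k => [|k IH]; first by rewrite /gs /= !mulr0 addr0.
rewrite !gsS /= IH /beta; fld.
Qed.

Lemma zeta_top s : (forall i, (1 <= i <= (size s).+1)%N -> q ^+ (2 * i) != 1) ->
  zeta q u v us vs s (size s).+1 = 0.
Proof.
move=> hf; rewrite /zeta -/(rr s (size s).+1) (rr_top hf).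
have -> : forall m, iter m (L s) vz = vz by elim=> // m IH; rewrite iterS IH vz_L.
by [].
Qed.

Lemma zeta1 a : zeta q u v us vs [:: a] 1 = (u * (a / q) + v * q) * (us + vs * (q * ainv a) * q).
Proof.
rewrite (zeta_cons a [::] (k:=1)) //.
rewrite /= /zeta /= /u0 /= /Lop /Rop /= /alpha /beta /lam0 /lam1 /= !expr0; fld.
Qed.

Lemma fac_neq0 j : q ^+ (2 * j) != 1 -> q ^+ j - q ^- j != 0.
Proof.
apply: contra; rewrite subr_eq0 => /eqP h.
by rewrite mulnC exprM expr2 {1}h mulVf // expf_neq0.
Qed.

Lemma main_step a s k (bbs ccs : F) : a != 0 -> q * q - 1 != 0 -> q - q^-1 != 0 ->
 (forall i, (1 <= i <= (size s).+1)%N -> q ^+ (2 * i) != 1) ->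
 u * vs = - bbs * q^-1 * (q - q^-1) ^+ 2 -> v * us = - ccs * q^-1 * (q - q^-1) ^+ 2 ->
 (1 <= k <= (size s).+1)%N ->
 sigma q u v us vs (a :: s) k =
   (q ^+ ((size s).+1 - k) - q ^- ((size s).+1 - k)) *
     (bbs * q ^- ((size s).+1 - k) - ccs * q ^+ ((size s).+1 - k)) * sigma q u v us vs s k.-1
   + sigma q u v us vs s k + sigma q u v us vs [:: a] 1 * sigma q u v us vs s k.-1.
Proof.
move=> ha hq2 hqq hf hu hv /andP[hk1 hk2].
case: k hk1 hk2 => // k _ hk; rewrite ltnS in hk.
set n := size s.
have hq2' : q^-1 * q^-1 - 1 != 0.
  rewrite -invfM subr_eq0 eq_sym -[1](@invr1 F) (inj_eq (@invr_inj F)) -subr_eq0 //.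
  by rewrite -opprB oppr_eq0.
have G1 : gs (q * q) k.+1 = ((q * q) ^+ k.+1 - 1) / (q * q - 1).
  by rewrite -geom [_ * gs _ _]mulrC mulfK.
have G2 : gs (q^-1 * q^-1) k.+1 = ((q^-1 * q^-1) ^+ k.+1 - 1) / (q^-1 * q^-1 - 1).
  by rewrite -geom [_ * gs _ _]mulrC mulfK.
set Y := q ^+ k; set M := q ^+ (n - k).
have hY : Y != 0 by rewrite expf_neq0.
have hM : M != 0 by rewrite expf_neq0.
have hn : q ^+ n = M * Y by rewrite /M /Y -exprD subnK.
have hni : (q^-1) ^+ n = (M * Y)^-1 by rewrite exprVn hn.
have e1 : (q * q) ^+ k.+1 = q * q * (Y * Y) by rewrite exprS exprMn.
have e2 : (q^-1 * q^-1) ^+ k.+1 = q^-1 * q^-1 * (Y^-1 * Y^-1) by rewrite exprS exprMn exprVn.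
have hl1 : lam1 n k = M * Y * (Y^-1 * Y^-1) by rewrite /lam1 hn exprMn exprVn.
have hl0 : lam0 n k = (M * Y)^-1 * (Y * Y) by rewrite /lam0 hni exprMn.
have hEC : gsumF (beta a (lam1 n k) (lam0 n k)) k.+1 * gsumF (alpha a n) k.+1 =
  (q * Y - (q * Y)^-1) ^+ 2 * ((M - M^-1) * (bbs * M^-1 - ccs * M)
   + (u * (a / q) + v * q) * (us + vs * (q * a^-1) * q) / (q - q^-1) ^+ 2).
  rewrite beta_sum alpha_sum G1 G2 e1 e2 hl1 hl0 hni hn /ainv.
  exact: key.
rewrite /sigma (zeta_cons _ _ (ltn0Sn k)) zeta1 -/n /= hEC.
rewrite big_nat_recr //= big_nat1.
set P := \prod_(1 <= j < k.+1) _.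
have hP : P != 0.
  rewrite /P prodf_seq_neq0; apply/allP => j; rewrite mem_index_iota => /andP[h1 h2] /=.
  rewrite expf_neq0 // fac_neq0 // hf // h1 /=.
  by apply: (leq_trans (leq_trans _ hk) (leqnSn n)); rewrite -ltnS.
have hqY : q * Y - (q * Y)^-1 != 0.
  rewrite /Y -exprS fac_neq0 // hf //.
have hq1 : q ^+ 1 - q ^- 1 != 0 by rewrite expr1.
have hqY2 : q * Y * (q * Y) - 1 != 0.
  have -> : q * Y * (q * Y) - 1 = q * Y * (q * Y - (q * Y)^-1) by rewrite mulrBr divff // mulf_neq0.
  by rewrite !mulf_neq0.
rewrite [q ^+ k.+1]exprS -/Y /ainv !expr2.
fld.
Qed.

End Main.


Theorem proposition7p11 (F : closedFieldType) (q b c bs cs u v us vs : F)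
  (hq0 : q != 0) (hq2 : q ^+ 2 != 1)
  (hb : b != 0) (hc : c != 0) (hbs : bs != 0) (hcs : cs != 0)
  (huv : u * vs = - (b * bs) * q^-1 * (q - q^-1) ^+ 2)
  (hvu : v * us = - (c * cs) * q^-1 * (q - q^-1) ^+ 2)
  (d : nat) (hd : (1 <= d)%N) (hfeas : feasible q d)
  (a : F) (ha : a != 0) (s : seq F) (hs : size s = d.-1)
  (hs0 : all (fun x => x != 0) s) :
  let sig := sigma q u v us vs in
  sig (a :: s) 0%N = 1 /\
  (forall n : nat, (1 <= n <= d.-1)%N ->
     sig (a :: s) n =
       (q ^+ (d - n) - q ^- (d - n)) * (b * bs * q ^- (d - n) - c * cs * q ^+ (d - n))
         * sig s n.-1
       + sig s n + sig [:: a] 1%N * sig s n.-1) /\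
  sig (a :: s) d = sig [:: a] 1%N * sig s d.-1.
Proof.
move=> sig.
have hd' : (size s).+1 = d by rewrite hs prednK.
have hqq1 : q * q - 1 != 0 by rewrite -expr2 subr_eq0.
have hqq2 : q - q^-1 != 0.
  have -> : q - q^-1 = (q * q - 1) / q by rewrite mulrBl mulfK // mul1r.
  by rewrite mulf_neq0 // invr_eq0.
have hf : forall i, (1 <= i <= (size s).+1)%N -> q ^+ (2 * i) != 1.
  by rewrite hd'; exact: hfeas.
have MS := fun k => @main_step F q hq0 u v us vs a s k (b * bs) (c * cs) ha hqq1 hqq2 hf huv hvu.
rewrite hd' in MS.
split.
  rewrite /sig /sigma /zeta /= big_geq // /u0 eqxx divr1 //.
split.
  move=> n /andP[h1 h2]; rewrite /sig MS // h1 /=.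
  by apply: (leq_trans h2); rewrite -hd' /= leqnSn.
rewrite /sig MS; last by rewrite hd leqnn.
have -> : sigma q u v us vs s d = 0.
  by rewrite /sigma -hd' (zeta_top hq0 u v us vs hf) mul0r.
by rewrite subnn expr0 invr1 subrr !mul0r !add0r.
Qed.
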